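(* Let $D$ be a knot diagram, and assume that every ineffective region set for $D$ has even cardinality. Call a crossing $c$ of $D$ a $(\star)$-crossing if the crossing change at $c$ is realized by region crossing changes about some set consisting of an odd number of regions of $D$. Then the crossing change at every crossing of $D$ is realized by some finite sequence of region freeze crossing changes on $D$ if and only if the number of $(\star)$-crossings of $D$ is even.
   Context: A knot diagram is a regular projection of a knot into the plane with over/under information at each crossing. Regions are the connected components of the complement of the projection; a crossing touches a region $R$ if it lies on the boundary of $R$. A region crossing change at $R$ changes every crossing touching $R$ (each once); a region freeze crossing change at $R$ changes every crossing not touching $R$ and leaves those touching $R$ unchanged. For a set $\mathcal{R}$ of distinct regions, region crossing changes about $\mathcal{R}$ means applying the region crossing change at each region of $\mathcal{R}$ once (so a crossing is changed iff it touches an odd number of regions of $\mathcal{R}$). A set $\mathcal{R}^{\ast}$ of regions is ineffective for $D$ if region crossing changes about $\mathcal{R}^{\ast}$ do not change $D$ in consequence. A sequence of local moves realizes the crossing change at a crossing $c$ if it produces the same diagram as changing the single crossing $c$ of $D$. *)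

(* Defs.v *)
From mathcomp Require Import all_boot all_fingroup.
Set Implicit Arguments. Unset Strict Implicit. Unset Printing Implicit Defensive.
Local Open Scope group_scope.

Section KnotDiagrams.
Variable dart : finType.

(* A knot projection on the 2-sphere (equivalently the plane, the point at
   infinity lying in some region) given as a combinatorial map:
   [rot] = cyclic rotation of the half-edges (darts) around each crossing,
   [opp] = the fixed-point-free involution pairing the two darts of an edge.
   Crossings = rot-orbits, edges = opp-orbits, regions = orbits of
   d |-> rot (opp d).  Straight-ahead walk: d |-> opp (rot^2 d). *)
Definition crossing_of (rot : {perm dart}) (d : dart) : {set dart} := porbit rot d.
Definition crossings (rot : {perm dart}) : {set {set dart}} := porbits rot.
Definition regions (rot opp : {perm dart}) : {set {set dart}} := porbits (opp * rot).

Definition is_knot_projection (rot opp : {perm dart}) : Prop :=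
  [/\ (forall d, opp (opp d) = d /\ opp d != d),
      (forall d, #|porbit rot d| = 4),
      (forall x y, connect (fun a b => (b == rot a) || (b == opp a)) x y),
      (* Euler formula V - E + F = 2 : genus zero (planar) *)
      (#|porbits rot| + #|porbits (opp * rot)| = #|porbits opp| + 2)%N
    & (* the curve has exactly one component (traversed in two directions) *)
      #|porbits (rot ^+ 2 * opp)| = 2%N].

(* Over/under information: [o d] = true iff dart d lies on the over-strand.
   Opposite darts lie on the same strand, adjacent ones on different strands. *)
Definition valid_over (rot : {perm dart}) (o : {ffun dart -> bool}) : Prop :=
  forall d, o (rot d) = ~~ o d.

Definition touches (R c : {set dart}) : bool := [exists d, (d \in R) && (d \in c)].

Definition crossing_change (c : {set dart}) (o : {ffun dart -> bool}) : {ffun dart -> bool} :=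
  [ffun d => o d (+) (d \in c)].

Definition region_cc (rot : {perm dart}) (R : {set dart}) (o : {ffun dart -> bool})
  : {ffun dart -> bool} :=
  [ffun d => o d (+) touches R (crossing_of rot d)].

Definition region_freeze_cc (rot : {perm dart}) (R : {set dart}) (o : {ffun dart -> bool})
  : {ffun dart -> bool} :=
  [ffun d => o d (+) ~~ touches R (crossing_of rot d)].

Definition region_cc_about (rot : {perm dart}) (S : {set {set dart}}) (o : {ffun dart -> bool})
  : {ffun dart -> bool} :=
  [ffun d => o d (+) odd #|[set R in S | touches R (crossing_of rot d)]|].

Definition ineffective (rot opp : {perm dart}) (o : {ffun dart -> bool})
  (S : {set {set dart}}) : Prop :=
  S \subset regions rot opp /\ region_cc_about rot S o = o.

Definition star_crossing (rot opp : {perm dart}) (o : {ffun dart -> bool})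
  (c : {set dart}) : bool :=
  [exists S : {set {set dart}}, [&& S \subset regions rot opp, odd #|S| &
    region_cc_about rot S o == crossing_change c o]].

Definition freeze_realizable (rot opp : {perm dart}) (o : {ffun dart -> bool})
  (c : {set dart}) : Prop :=
  exists s : seq {set dart}, all (fun R => R \in regions rot opp) s /\
    foldl (fun o' R => region_freeze_cc rot R o') o s = crossing_change c o.

End KnotDiagrams.

(* Main.v *)
Require Import Defs.
From mathcomp Require Import all_boot all_fingroup.
From mathcomp Require Import zify.
Set Implicit Arguments. Unset Strict Implicit. Unset Printing Implicit Defensive.

Definition fx (T : finType) (g h : {ffun T -> bool}) : {ffun T -> bool} := [ffun x => g x (+) h x].
Definition f0 {T : finType} : {ffun T -> bool} := [ffun => false].
Section F2.
Variable T : finType.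
Implicit Types a b c : {ffun T -> bool}.

Lemma fxA a b c : fx a (fx b c) = fx (fx a b) c.
Proof. by apply/ffunP=> x; rewrite !ffunE addbA. Qed.
Lemma fxC a b : fx a b = fx b a.
Proof. by apply/ffunP=> x; rewrite !ffunE addbC. Qed.
Lemma fxx a : fx a a = f0.
Proof. by apply/ffunP=> x; rewrite !ffunE addbb. Qed.
Lemma fx0 a : fx a f0 = a.
Proof. by apply/ffunP=> x; rewrite !ffunE addbF. Qed.
Lemma fxK a b : fx (fx a b) b = a.
Proof. by rewrite -fxA fxx fx0. Qed.

Lemma card_fibers (U : finType) (A : {set {ffun T -> bool}}) (f : {ffun T -> bool} -> {ffun U -> bool}) :
  (forall a b, a \in A -> b \in A -> fx a b \in A) ->
  (forall a b, f (fx a b) = fx (f a) (f b)) ->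
  #|A| = #|[set a in A | f a == f0]| * #|f @: A|.
Proof.
move=> Acl fadd.
rewrite -sum1_card (partition_big_imset f) /= mulnC -sum_nat_const.
apply: eq_bigr => b /imsetP[a0 Aa0 ->].
rewrite sum1dep_card.
have -> : [set x | (x \in A) && (f x == f a0)] = [set fx k a0 | k in [set a in A | f a == f0]].
  apply/setP=> y; rewrite inE; apply/andP/imsetP.
    move=> [Ay /eqP fy]; exists (fx y a0); last by rewrite fxK.
    by rewrite inE Acl //= fadd fy; apply/eqP/ffunP=> x; rewrite !ffunE addbb.
  move=> [k]; rewrite inE => /andP[Ak /eqP fk] ->.
  by rewrite Acl // fadd fk; split=> //; apply/eqP/ffunP=> x; rewrite !ffunE.
rewrite card_imset //.
by move=> u v /= e; rewrite -(fxK u a0) e fxK.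
Qed.

Definition invset (p : {perm T}) := [set g : {ffun T -> bool} | [forall x, g (p x) == g x]].

Lemma inv_orbit (p : {perm T}) g y x : g \in invset p -> y \in porbit p x -> g y = g x.
Proof.
rewrite inE => /forallP H /porbitP[i ->]; elim: i => [|i IH]; first by rewrite expg0 perm1.
by rewrite expgSr permM (eqP (H _)).
Qed.

Lemma card_invset (p : {perm T}) : #|invset p| = 2 ^ #|porbits p|.
Proof.
pose S := {R : {set T} | R \in porbits p}.
have cS : #|{: S}| = #|porbits p| by rewrite card_sig.
pose Phi (h : {ffun S -> bool}) : {ffun T -> bool} :=
  [ffun x => if insub (porbit p x) is Some R then h R else false].
have PhiE h x (Hx : porbit p x \in porbits p) : Phi h x = h (Sub (porbit p x) Hx).
  by rewrite ffunE insubT.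
have inP x : porbit p x \in porbits p by apply: imset_f.
have -> : invset p = Phi @: [set: {ffun S -> bool}].
  apply/setP=> g; apply/idP/imsetP.
    move=> Hg; exists [ffun R : S => if [pick y in val R] is Some y then g y else false] => //.
    apply/ffunP=> x; rewrite (PhiE _ _ (inP x)) ffunE /=.
    case: pickP => [y Hy|H]; first by rewrite (inv_orbit Hg Hy).
    by move: (H x); rewrite porbit_id.
  move=> [h _ ->]; rewrite inE; apply/forallP=> x.
  rewrite (PhiE _ _ (inP x)) (PhiE _ _ (inP (p x))).
  have := mem_porbit p 1 x; rewrite expg1 -eq_porbit_mem => /eqP Ex.
  by move: (inP (p x)); rewrite Ex => H; rewrite (bool_irrelevance H (inP x)).
rewrite card_imset ?cardsT ?card_ffun ?card_bool ?cS //.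
move=> h1 h2 e; apply/ffunP=> R; case: R => R HR.
have [x _ ex] := imsetP HR.
have := congr1 (fun g : {ffun T -> bool} => g x) e; rewrite /= !(PhiE _ _ (inP x)).
by subst R; rewrite (bool_irrelevance HR (inP x)).
Qed.

End F2.

Lemma card_filter_uniq (T : finType) (s : seq T) (P : pred T) :
  uniq s -> #|[set x | (x \in s) && P x]| = count P s.
Proof.
move=> U; rewrite -size_filter -(card_uniqP (filter_uniq P U)).
by apply: eq_card => x; rewrite !inE mem_filter andbC.
Qed.

Lemma count4 (T : finType) (f0 f1 f2 f3 : T) (P : pred T) :
  f0 != f1 -> f1 != f2 -> f2 != f3 -> f3 != f0 -> ~~ ((f0 == f2) && (f1 == f3)) ->
  odd #|[set x | (x \in [:: f0; f1; f2; f3]) && P x]| =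
  P f0 (+) P f1 (+) P f2 (+) P f3 (+) ((f0 == f2) && P f0) (+) ((f1 == f3) && P f1).
Proof.
move=> n01 n12 n23 n30 nb.
have F a b (H : a != b) : ((a == b) = false) * ((b == a) = false).
  by split; [exact: negbTE | rewrite eq_sym; exact: negbTE].
case: (f0 =P f2) nb => [e02|n02]; case: (f1 =P f3) => [e13|n13] //= _.
- have -> : [set x | (x \in [:: f0; f1; f2; f3]) && P x] = [set x | (x \in [:: f0; f1; f3]) && P x].
    by apply/setP=> x; rewrite !inE -e02; case: (x == f0); case: (x == f1); case: (x == f3).
  rewrite card_filter_uniq /=; last first.
    by rewrite !inE !(F _ _ _ n01) !(F _ _ _ n30) !(F _ _ _ (introN eqP n13)).
  by rewrite -e02; case: (P f0); case: (P f1); case: (P f3).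
- have -> : [set x | (x \in [:: f0; f1; f2; f3]) && P x] = [set x | (x \in [:: f0; f1; f2]) && P x].
    by apply/setP=> x; rewrite !inE -e13; case: (x == f0); case: (x == f1); case: (x == f2).
  rewrite card_filter_uniq /=; last first.
    by rewrite !inE !(F _ _ _ n01) !(F _ _ _ n12) !(F _ _ _ (introN eqP n02)).
  by rewrite -e13; case: (P f0); case: (P f1); case: (P f2).
- rewrite card_filter_uniq /=; last first.
    by rewrite !inE !(F _ _ _ n01) !(F _ _ _ n12) !(F _ _ _ n23) !(F _ _ _ n30) !(F _ _ _ (introN eqP n02)) !(F _ _ _ (introN eqP n13)).
  by case: (P f0); case: (P f1); case: (P f2); case: (P f3).
Qed.



Section Main.
Variables (dart : finType) (rot opp : {perm dart}).
Hypothesis oppK : forall d, opp (opp d) = d.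
Hypothesis oppN : forall d, opp d != d.
Hypothesis rot4 : forall d, #|porbit rot d| = 4.
Hypothesis conn : forall x y, connect (fun a b => (b == rot a) || (b == opp a)) x y.
Hypothesis euler : (#|porbits rot| + #|porbits (opp * rot)| = #|porbits opp| + 2)%N.
Hypothesis knot : #|porbits (rot ^+ 2 * opp)%g| = 2.

Local Notation r x := (rot x).
Local Notation phi := (opp * rot)%g.
Local Notation s := (rot ^+ 2 * opp)%g.
Local Notation F y := (porbit phi y).

Lemma rotK4 d : r (r (r (r d))) = d.
Proof. by have := iter_porbit rot d; rewrite rot4. Qed.

Lemma trajE d : traject rot d 4 = [:: d; r d; r (r d); r (r (r d))].
Proof. by []. Qed.

Lemma rot_uniq d : uniq [:: d; r d; r (r d); r (r (r d))].
Proof. by have := uniq_traject_porbit rot d; rewrite rot4. Qed.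

Lemma in_rot d y : (y \in porbit rot d) = (y \in [:: d; r d; r (r d); r (r (r d))]).
Proof. by rewrite porbit_traject rot4. Qed.

Lemma phiE x : phi x = r (opp x).
Proof. by rewrite permM. Qed.

Lemma porbit_step (p : {perm dart}) x : porbit p (p x) = porbit p x.
Proof. by have := mem_porbit p 1 x; rewrite expg1 -eq_porbit_mem => /eqP. Qed.

Lemma rot_orbit d : porbit rot (r d) = porbit rot d.
Proof. exact: porbit_step. Qed.

Definition d2 (g : {ffun dart -> bool}) : {ffun dart -> bool} := [ffun x => g x (+) g (r x)].
Definition d1 (Z : {ffun dart -> bool}) : {ffun dart -> bool} :=
  [ffun x => Z x (+) Z (r x) (+) Z (r (r x)) (+) Z (r (r (r x)))].

Lemma face_inv g x : g \in invset phi -> g (r (opp x)) = g x.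
Proof. by rewrite inE => /forallP/(_ x)/eqP; rewrite phiE. Qed.

Lemma face_inv_opp g x : g \in invset phi -> g (opp x) = g (r x).
Proof. by move=> H; rewrite -(face_inv (opp x) H) oppK. Qed.

Lemma d2_add a b : d2 (fx a b) = fx (d2 a) (d2 b).
Proof. by apply/ffunP=> x; rewrite !ffunE; case: (a x); case: (b x); case: (a (r x)); case: (b (r x)). Qed.

Lemma d1_add a b : d1 (fx a b) = fx (d1 a) (d1 b).
Proof.
apply/ffunP=> x; rewrite !ffunE.
by case: (a x); case: (b x); case: (a (r x)); case: (b (r x)); case: (a (r (r x))); case: (b (r (r x)));
   case: (a (r (r (r x)))); case: (b (r (r (r x)))).
Qed.

Lemma invset_fx (p : {perm dart}) a b : a \in invset p -> b \in invset p -> fx a b \in invset p.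
Proof.
rewrite !inE => /forallP Ha /forallP Hb; apply/forallP=> x.
by rewrite !ffunE (eqP (Ha x)) (eqP (Hb x)).
Qed.

Lemma d2_edge g : g \in invset phi -> d2 g \in invset opp.
Proof.
move=> Hg; rewrite inE; apply/forallP=> x; rewrite !ffunE.
by rewrite (face_inv_opp _ Hg) (face_inv _ Hg) addbC.
Qed.

Lemma d1d2 g : d1 (d2 g) = f0.
Proof.
apply/ffunP=> x; rewrite !ffunE rotK4.
by case: (g x); case: (g (r x)); case: (g (r (r x))); case: (g (r (r (r x)))).
Qed.

Lemma d1_vert Z : d1 Z \in invset rot.
Proof.
rewrite inE; apply/forallP=> x; rewrite !ffunE rotK4.
by case: (Z x); case: (Z (r x)); case: (Z (r (r x))); case: (Z (r (r (r x)))).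
Qed.

Lemma conn_ind (P : dart -> Prop) x0 :
  P x0 -> (forall a, P a -> P (r a)) -> (forall a, P a -> P (opp a)) -> forall y, P y.
Proof.
move=> H0 Hr Ho y; have /connectP[p pth ->] := conn x0 y.
elim: p x0 H0 pth => //= a p IH x0 H0 /andP[/orP[]/eqP e pth]; apply: IH pth; by rewrite e; auto.
Qed.

Definition fone : {ffun dart -> bool} := [ffun => true].

Lemma ker_d2 g : g \in invset phi -> d2 g = f0 -> g = f0 \/ g = fone.
Proof.
move=> Hg H; have Hr a : g (r a) = g a.
  by have := congr1 (fun h : {ffun dart -> bool} => h a) H; rewrite !ffunE; case: (g a); case: (g (r a)).
case: (pickP (fun _ : dart => true)) => [x0 _|e]; last first.
  by left; apply/ffunP=> x; move: (e x).
have Hall : forall y, g y = g x0.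
  apply: (@conn_ind (fun y => g y = g x0) x0 erefl) => a Ha.
  - by rewrite Hr.
  - by rewrite (face_inv_opp _ Hg) Hr.
case E: (g x0); [right|left]; apply/ffunP=> y; by rewrite !ffunE Hall.
Qed.

Lemma card_ker_d2 (x0 : dart) : #|[set g in invset phi | d2 g == f0]| = 2.
Proof.
have -> : [set g in invset phi | d2 g == f0] = [set f0; fone].
  apply/setP=> g; rewrite !inE; apply/andP/orP.
    move=> [Hg /eqP H]; have Hg' : g \in invset phi by rewrite inE.
    by case: (ker_d2 Hg' H) => ->; [left|right].
  case=> /eqP ->; (split; [apply/forallP=> x; rewrite !ffunE //|
     apply/eqP/ffunP=> x; rewrite !ffunE //]).
rewrite cards2; case: eqP => // /(congr1 (fun h : {ffun dart -> bool} => h)) e.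
by have := congr1 (fun h : {ffun dart -> bool} => h x0) e; rewrite !ffunE.
Qed.


Definition ind x : {ffun dart -> bool} := [ffun y => y \in porbit rot x].
Definition edgeI a : {ffun dart -> bool} := [ffun y => (y == a) || (y == opp a)].

Lemma xor4 (y0 y1 y2 y3 a : dart) : uniq [:: y0; y1; y2; y3] ->
  (y0 == a) (+) (y1 == a) (+) (y2 == a) (+) (y3 == a) = (a \in [:: y0; y1; y2; y3]).
Proof.
rewrite /= !inE !negb_or => /and4P[/and3P[n01 n02 n03] /andP[n12 n13] n23 _].
rewrite !(eq_sym a).
case: (y0 =P a) => [<-|_]; first by rewrite (eq_sym y1) (eq_sym y2) (eq_sym y3) (negbTE n01) (negbTE n02) (negbTE n03).
case: (y1 =P a) => [<-|_]; first by rewrite (eq_sym y2) (eq_sym y3) (negbTE n12) (negbTE n13).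
case: (y2 =P a) => [<-|_]; first by rewrite (eq_sym y3) (negbTE n23).
by case: (y3 =P a).
Qed.

Lemma d1_edge a : d1 (edgeI a) = fx (ind a) (ind (opp a)).
Proof.
apply/ffunP=> y; rewrite !ffunE (porbit_sym rot y a) (porbit_sym rot y (opp a)) !in_rot.
rewrite -!xor4 ?rot_uniq //.
have H z : (z == a) || (z == opp a) = (z == a) (+) (z == opp a).
  case: (z =P a) => [->|_]; first by case: (a =P opp a) => // e; move: (oppN a); rewrite -e eqxx.
  by case: (z == opp a).
rewrite !H.
by case: (y == a); case: (y == opp a); case: (r y == a); case: (r y == opp a);
  case: (r (r y) == a); case: (r (r y) == opp a); case: (r (r (r y)) == a); case: (r (r (r y)) == opp a).
Qed.

Lemma edgeI_inv a : edgeI a \in invset opp.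
Proof.
rewrite inE; apply/forallP=> y; rewrite !ffunE.
case: (y =P a) => [->|na]; first by rewrite !eqxx !orbT.
case: (y =P opp a) => [->|nb]; first by rewrite oppK !eqxx ?orbT ?orTb.
apply/eqP/negbTE/negP => /orP[] /eqP e.
  by apply: nb; rewrite -e oppK.
by apply: na; rewrite -[y]oppK e oppK.
Qed.

Definition Im1 := d1 @: invset opp.

Lemma Im1_fx a b : a \in Im1 -> b \in Im1 -> fx a b \in Im1.
Proof.
move=> /imsetP[z Hz ->] /imsetP[w Hw ->]; rewrite -d1_add.
by apply: imset_f; apply: invset_fx.
Qed.

Lemma ind_step a : ind (r a) = ind a.
Proof. by apply/ffunP=> y; rewrite !ffunE rot_orbit. Qed.

Lemma path_Im1 x0 y : fx (ind y) (ind x0) \in Im1.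
Proof.
move: y; apply: (@conn_ind (fun y => fx (ind y) (ind x0) \in Im1) x0).
- by rewrite fxx -(d1d2 f0); apply: imset_f; apply: d2_edge; rewrite inE; apply/forallP=> x; rewrite !ffunE.
- by move=> a; rewrite ind_step.
- move=> a Ha; have := Im1_fx Ha (imset_f d1 (edgeI_inv a)).
  have -> : fx (ind (opp a)) (ind x0) = fx (fx (ind a) (ind x0)) (d1 (edgeI a)).
    by rewrite d1_edge; apply/ffunP=> z; rewrite !ffunE; case: (z \in porbit rot a); case: (z \in porbit rot x0); case: (z \in porbit rot (opp a)).
  by [].
Qed.

Lemma vert_Im1 x0 h : h \in invset rot -> h \in Im1 \/ fx h (ind x0) \in Im1.
Proof.
move: {2}#|[set y | h y]| (leqnn #|[set y | h y]|) => n.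
elim: n h => [|n IH] h Hn Hh.
  left; have -> : h = f0.
    apply/ffunP=> y; rewrite !ffunE; apply/negP=> hy.
    by move: Hn; rewrite leqn0 => /eqP/cards0_eq/setP/(_ y); rewrite !inE hy.
  by rewrite -(d1d2 f0); apply: imset_f; apply: d2_edge; rewrite inE; apply/forallP=> x; rewrite !ffunE.
case: (pickP (fun y => h y)) => [x hx|hn]; last first.
  left; have -> : h = f0 by apply/ffunP=> y; rewrite !ffunE; move: (hn y) => ->.
  by rewrite -(d1d2 f0); apply: imset_f; apply: d2_edge; rewrite inE; apply/forallP=> z; rewrite !ffunE.
pose h' := fx h (ind x).
have Hh' : h' \in invset rot.
  apply: invset_fx => //; rewrite inE; apply/forallP=> z; rewrite !ffunE.
  by rewrite (porbit_sym rot (r z)) (porbit_sym rot z) rot_orbit.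
have lt : #|[set y | h' y]| < #|[set y | h y]|.
  apply: proper_card; apply/properP; split.
    apply/subsetP=> y; rewrite !inE !ffunE.
    case Hy: (y \in porbit rot x); last by rewrite addbF.
    by rewrite (inv_orbit Hh Hy) hx.
  by exists x; rewrite !inE ?ffunE ?hx ?porbit_id.
have := IH h' _ Hh'; case.
- by rewrite -ltnS; apply: leq_trans lt Hn.
- move=> Hi; right; have := Im1_fx Hi (path_Im1 x0 x).
  have -> // : fx h' (fx (ind x) (ind x0)) = fx h (ind x0).
  by rewrite /h'; apply/ffunP=> z; rewrite !ffunE; case: (h z); case: (z \in porbit rot x); case: (z \in porbit rot x0).
- move=> Hi; left; have := Im1_fx Hi (path_Im1 x0 x).
  have -> // : fx (fx h' (ind x0)) (fx (ind x) (ind x0)) = h.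
  by rewrite /h'; apply/ffunP=> z; rewrite !ffunE; case: (h z); case: (z \in porbit rot x); case: (z \in porbit rot x0).
Qed.

Lemma H1 (x0 : dart) Z : Z \in invset opp -> d1 Z = f0 -> exists2 g, g \in invset phi & d2 g = Z.
Proof.
move=> HZ HdZ.
pose K := [set W in invset opp | d1 W == f0].
pose Im2 := d2 @: invset phi.
have Hsub : Im2 \subset K.
  by apply/subsetP=> W /imsetP[g Hg ->]; rewrite inE d2_edge //= d1d2 eqxx.
have cE : #|invset opp| = #|K| * #|Im1|.
  by apply: card_fibers; [exact: invset_fx | exact: d1_add].
have cF : #|invset phi| = 2 * #|Im2|.
  by rewrite (card_fibers (f := d2)) ?card_ker_d2 //; [exact: invset_fx | exact: d2_add].
have cV : #|invset rot| <= 2 * #|Im1|.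
  apply: (@leq_trans #|Im1 :|: [set fx i (ind x0) | i in Im1]|).
    apply: subset_leq_card; apply/subsetP=> h Hh; rewrite inE.
    case: (vert_Im1 x0 Hh) => [-> //|Hi]; apply/orP; right; apply/imsetP.
    by exists (fx h (ind x0)) => //; rewrite fxK.
  by rewrite mul2n -addnn (leq_trans (leq_card_setU _ _)) // leq_add2l leq_imset_card.
rewrite !card_invset in cE cF cV.
have KIm : #|K| <= #|Im2|.
  have h2V : 0 < 2 ^ #|porbits rot| by rewrite expn_gt0.
  have e1 : 2 ^ #|porbits rot| * 2 ^ #|porbits phi| = 4 * 2 ^ #|porbits opp|.
    by rewrite -expnD euler expnD mulnC.
  move: e1 cE cF cV h2V; move: (2 ^ #|porbits rot|) (2 ^ #|porbits phi|) (2 ^ #|porbits opp|) => a b c.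
  move=> e1 cE cF cV ha; rewrite cF cE in e1.
  have : #|K| * (a * 2) <= #|Im2| * (a * 2).
    apply: (@leq_trans (#|K| * (2 * #|Im1|) * 2)).
      by rewrite mulnA leq_mul2r /= leq_mul2l cV orbT.
    by nia.
  by rewrite leq_mul2r muln_eq0 (negbTE (lt0n_neq0 ha)).
have eq : Im2 = K.
  by apply/eqP; rewrite eqEcard Hsub KIm.
have : Z \in K by rewrite inE HZ HdZ eqxx.
by rewrite -eq => /imsetP[g Hg ->]; exists g.
Qed.


Lemma sE x : s x = opp (r (r x)).
Proof. by rewrite permM permX. Qed.

Lemma rK4 d : r (r (r (r d))) = d.
Proof. exact: rotK4. Qed.

Lemma r2_neq d : r (r d) != d.
Proof. by apply/eqP=> e; move: (rot_uniq d); rewrite e /= !inE eqxx !orbT. Qed.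

Lemma s_rev y : s (r (r (s y))) = r (r y).
Proof. by rewrite !sE rK4 oppK. Qed.

Lemma iter_rev x k i : iter k s x = r (r x) -> i <= k -> r (r (iter i s x)) = iter (k - i) s x.
Proof.
move=> Hk; elim: i => [|i IH] Hi; first by rewrite subn0 Hk.
apply: (@perm_inj _ s); rewrite /= s_rev IH ?(ltnW Hi) //.
have -> : k - i = (k - i.+1).+1 by lia.
by [].
Qed.

Lemma not_same_orbit x : r (r x) \notin porbit s x.
Proof.
apply/negP => /porbitP[k]; rewrite permX => Hk; move: (esym Hk) => {Hk}.
have [m [-> | ->]] : exists m, k = m.*2 \/ k = m.*2.+1.
  exists k./2; have := odd_double_half k; case: (odd k) => /= e; [right|left]; lia.
- move=> Hk2; have := iter_rev Hk2 (i := m) ltac:(lia).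
  have -> : m.*2 - m = m by lia.
  by move=> e; move: (r2_neq (iter m s x)); rewrite e eqxx.
- move=> Hk2; have := iter_rev Hk2 (i := m) ltac:(lia).
  have -> : m.*2.+1 - m = m.+1 by lia.
  rewrite iterS sE => e.
  by move: (oppN (r (r (iter m s x)))); rewrite -e eqxx.
Qed.

Lemma orbit_dich b x : (x \in porbit s b) = (r (r x) \notin porbit s b).
Proof.
have ne : porbit s x != porbit s (r (r x)).
  by apply/negP => /eqP e; move: (not_same_orbit x); rewrite e porbit_id.
have E : porbits s = [set porbit s x; porbit s (r (r x))].
  apply/esym/eqP; rewrite eqEcard cards2 ne knot leqnn andbT.
  by apply/subsetP=> R; rewrite !inE => /orP[]/eqP ->; apply: imset_f.
have : porbit s b \in porbits s by apply: imset_f.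
rewrite E !inE => /orP[]/eqP ->.
- by rewrite porbit_id (negbTE (not_same_orbit x)).
- by rewrite porbit_id porbit_sym (negbTE (not_same_orbit x)).
Qed.


Variable b : dart.
Local Notation O := (porbit s b).
Local Notation L := #|porbit s b|.
Definition idx y := index y (traject s b L).

Lemma L_gt0 : 0 < L.
Proof. by rewrite lt0n card_porbit_neq0. Qed.

Lemma iter_in k : iter k s b \in O.
Proof. by rewrite -permX mem_porbit. Qed.

Lemma iter_mod k : iter k s b = iter (k %% L) s b.
Proof.
rewrite {1}(divn_eq k L) addnC iterD; congr iter.
elim: (k %/ L) => [|n IH] //; by rewrite mulSn iterD IH iter_porbit.
Qed.

Lemma idx_lt y : y \in O -> idx y < L.
Proof. by rewrite porbit_traject => H; rewrite /idx -[X in _ < X](size_traject s b) index_mem. Qed.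

Lemma iter_idx y : y \in O -> iter (idx y) s b = y.
Proof.
move=> H; have := idx_lt H; rewrite /idx => lt.
by rewrite -(nth_traject s lt) nth_index // -porbit_traject.
Qed.

Lemma idx_iter k : k < L -> idx (iter k s b) = k.
Proof.
move=> lt; rewrite /idx -(nth_traject s lt) index_uniq ?size_traject //.
exact: uniq_traject_porbit.
Qed.

Lemma idx_inj y z : y \in O -> z \in O -> idx y = idx z -> y = z.
Proof. by move=> Hy Hz e; rewrite -(iter_idx Hy) -(iter_idx Hz) e. Qed.

Lemma s_in y : y \in O -> s y \in O.
Proof. by move=> H; rewrite -(iter_idx H) -iterS iter_in. Qed.

Lemma idx_s y : y \in O -> idx (s y) = (idx y).+1 %% L.
Proof.
move=> H; rewrite -{1}(iter_idx H) -iterS iter_mod idx_iter //.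
by rewrite ltn_pmod // L_gt0.
Qed.

Lemma iter_idx_mod y k : y \in O -> idx (iter k s y) = (idx y + k) %% L.
Proof.
move=> H; rewrite -{1}(iter_idx H) -iterD addnC iter_mod idx_iter //.
by rewrite ltn_pmod // L_gt0.
Qed.

Definition od y := if y \in O then y else opp y.

Lemma r2_notin x : x \in O -> r (r x) \notin O.
Proof. by rewrite orbit_dich. Qed.

Lemma notin_r2 x : x \notin O -> r (r x) \in O.
Proof. by rewrite orbit_dich negbK. Qed.

Lemma od_in y : od y \in O.
Proof.
rewrite /od; case: ifP => // /negbT H.
by have := s_in (notin_r2 H); rewrite sE rK4.
Qed.

Lemma opp_in y : y \in O -> opp y \notin O.
Proof.
move=> H; have : s (r (r y)) \notin O.
  by rewrite porbit_sym porbit_step -porbit_sym r2_notin.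
by rewrite sE rK4.
Qed.

Lemma od_opp y : od (opp y) = od y.
Proof.
rewrite /od; case: ifP => H; case: ifP => H' //.
- by move: (opp_in H'); rewrite H.
- move/negbT: H' => H'; have := s_in (notin_r2 H').
  by rewrite sE rK4 H.
Qed.

Lemma od_r2 x : x \in O -> od (r (r x)) = s x.
Proof. by move=> H; rewrite /od (negbTE (r2_notin H)) sE. Qed.

Definition eidx y := idx (od y).


Definition a1 d := if d \in O then d else r (r d).
Definition a2 d := if r d \in O then r d else r (r (r d)).

Lemma a1_in d : a1 d \in O.
Proof. by rewrite /a1; case: ifP => // /negbT; apply: notin_r2. Qed.
Lemma a2_in d : a2 d \in O.
Proof. by rewrite /a2; case: ifP => // /negbT; apply: notin_r2. Qed.

Lemma rot_dist d :
  [/\ d != r d, d != r (r d), d != r (r (r d)) &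
     [/\ r d != r (r d), r d != r (r (r d)) & r (r d) != r (r (r d))]].
Proof.
have := rot_uniq d; rewrite /= !inE !negb_or => /and4P[/and3P[? ? ?] /andP[? ?] ? _].
by split.
Qed.

Lemma a1_neq_a2 d : a1 d != a2 d.
Proof.
have [n01 n02 n03 [n12 n13 n23]] := rot_dist d.
by rewrite /a1 /a2; case: ifP => _; case: ifP => _ //; rewrite eq_sym //.
Qed.

Lemma cross_a1 d : porbit rot (a1 d) = porbit rot d.
Proof. by rewrite /a1; case: ifP => // _; rewrite !rot_orbit. Qed.
Lemma cross_a2 d : porbit rot (a2 d) = porbit rot d.
Proof. by rewrite /a2; case: ifP => // _; rewrite !rot_orbit. Qed.

Lemma O_cross d z : z \in porbit rot d -> z \in O -> z = a1 d \/ z = a2 d.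
Proof.
rewrite in_rot // !inE /a1 /a2 => /or4P[]/eqP -> Hz.
- by left; rewrite Hz.
- by right; rewrite Hz.
- by left; have := r2_notin Hz; rewrite rK4 => /negbTE ->.
- right; have := r2_notin Hz; rewrite rK4 => /negbTE ->.
  by [].
Qed.

Lemma a1_r2 d : a1 (r (r d)) = a1 d.
Proof.
rewrite /a1 rK4; case: ifP => H; case: ifP => H' //.
- by move: (r2_notin H'); rewrite H.
- by move/negbT: H' => /notin_r2; rewrite H.
Qed.


Definition K1 p q : {ffun dart -> bool} := [ffun y => (p < eidx y) && (eidx y <= q)].

Lemma eidx_O x : x \in O -> eidx x = idx x.
Proof. by move=> H; rewrite /eidx /od H. Qed.

Lemma eidx_r2 x : x \in O -> eidx (r (r x)) = (idx x).+1 %% L.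
Proof. by move=> H; rewrite /eidx od_r2 // idx_s. Qed.

Lemma K1_inv p q : K1 p q \in invset opp.
Proof. by rewrite inE; apply/forallP=> y; rewrite !ffunE /eidx od_opp. Qed.

Lemma ps_nat p q i : p < q < L -> i < L ->
  ((p < i) && (i <= q)) (+) ((p < i.+1 %% L) && (i.+1 %% L <= q)) = (i == p) || (i == q).
Proof.
move=> /andP[pq qL] iL; case: (ltnP i.+1 L) => h.
  rewrite modn_small //.
  case: (ltnP p i); case: (leqP i q); case: (ltnP p i.+1); case: (leqP i.+1 q); case: eqP; case: eqP;
    move=> /= *; first [done | exfalso; lia].
have -> : i.+1 = L by lia.
rewrite modnn.
case: (ltnP p i); case: (leqP i q); case: eqP; case: eqP; move=> /= *; first [done | exfalso; lia].
Qed.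

Lemma ps_O p q x : p < q < L -> x \in O -> K1 p q x (+) K1 p q (r (r x)) = (idx x == p) || (idx x == q).
Proof. by move=> H Hx; rewrite !ffunE eidx_O // eidx_r2 // ps_nat // idx_lt. Qed.

Lemma ps_a1 p q y : K1 p q y (+) K1 p q (r (r y)) = K1 p q (a1 y) (+) K1 p q (r (r (a1 y))).
Proof. by rewrite /a1; case: ifP => // _; rewrite rK4 addbC. Qed.

Lemma a2_a1 y : a2 y = a1 (r y).
Proof. by []. Qed.

Definition pc d0 := minn (idx (a1 d0)) (idx (a2 d0)).
Definition qc d0 := maxn (idx (a1 d0)) (idx (a2 d0)).

Lemma pq_lt d0 : pc d0 < qc d0 < L.
Proof.
have ne : idx (a1 d0) != idx (a2 d0).
  by apply/negP=> /eqP e; move: (a1_neq_a2 d0); rewrite (idx_inj (a1_in d0) (a2_in d0) e) eqxx.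
have h1 := idx_lt (a1_in d0); have h2 := idx_lt (a2_in d0).
rewrite /pc /qc; apply/andP; split; [|by rewrite gtn_max h1 h2].
move/eqP: ne => ne; by rewrite /minn /maxn; case: (ltnP (idx (a1 d0)) (idx (a2 d0))) => h; lia.
Qed.

Lemma minmax_eq (x u v : nat) : (x == minn u v) || (x == maxn u v) = (x == u) || (x == v).
Proof. by rewrite /minn /maxn; case: ltnP => _ //; rewrite orbC. Qed.

Lemma in_c d0 d : (d \in porbit rot d0) = (idx (a1 d) == pc d0) || (idx (a1 d) == qc d0).
Proof.
rewrite minmax_eq; apply/idP/idP.
  move=> H; have : a1 d \in porbit rot d0.
    have E : porbit rot d = porbit rot d0 by apply/eqP; rewrite eq_porbit_mem.
    by rewrite -E -(cross_a1 d) porbit_id.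
  by move=> /O_cross /(_ (a1_in d)) [] ->; rewrite eqxx ?orbT.
move=> /orP[]/eqP e.
  have := idx_inj (a1_in d) (a1_in d0) e => e'.
  by rewrite -cross_a1 -e' cross_a1 porbit_id.
have := idx_inj (a1_in d) (a2_in d0) e => e'.
by rewrite -cross_a2 -e' cross_a1 porbit_id.
Qed.

Lemma rot_in_eq y d0 : (r y \in porbit rot d0) = (y \in porbit rot d0).
Proof. by rewrite porbit_sym rot_orbit porbit_sym. Qed.

Lemma d1K1 d0 : d1 (K1 (pc d0) (qc d0)) = f0.
Proof.
apply/ffunP=> y; rewrite [in RHS]ffunE.
have e : d1 (K1 (pc d0) (qc d0)) y =
  (K1 (pc d0) (qc d0) y (+) K1 (pc d0) (qc d0) (r (r y))) (+)
  (K1 (pc d0) (qc d0) (r y) (+) K1 (pc d0) (qc d0) (r (r (r y)))).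
  rewrite [LHS]ffunE; set a := K1 _ _ y; set b' := K1 _ _ (r y); set c := K1 _ _ (r (r y)).
  by set e := K1 _ _ (r (r (r y))); case: a; case: b'; case: c; case: e.
rewrite e ps_a1 (ps_a1 _ _ (r y)) !ps_O ?a1_in ?pq_lt // -!in_c rot_in_eq.
by rewrite addbb.
Qed.

Lemma color d0 : exists2 g, g \in invset phi & d2 g = K1 (pc d0) (qc d0).
Proof. exact: (H1 b (K1_inv _ _) (d1K1 d0)). Qed.

Lemma gstep g K y : d2 g = K -> g (r y) = g y (+) K y.
Proof. by move=> <-; rewrite ffunE; case: (g y); case: (g (r y)). Qed.

Lemma face_rot_neq y : F y != F (r y).
Proof.
have fi : fone \in invset opp by rewrite inE; apply/forallP=> z; rewrite !ffunE.
have d1f : d1 fone = f0 by apply/ffunP=> z; rewrite !ffunE.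
have [chi Hc Hd] := H1 b fi d1f.
apply/negP=> /eqP e.
have : r y \in F y by rewrite e porbit_id.
move=> /(inv_orbit Hc); rewrite (gstep y Hd) ffunE.
by case: (chi y).
Qed.

Lemma ps_cross d0 y : K1 (pc d0) (qc d0) y (+) K1 (pc d0) (qc d0) (r (r y)) = (y \in porbit rot d0).
Proof. by rewrite ps_a1 ps_O ?a1_in ?pq_lt // in_c. Qed.

Lemma G2 d : ~~ ((F d == F (r (r d))) && (F (r d) == F (r (r (r d))))).
Proof.
have [g Hg Hd] := color d.
apply/negP => /andP[/eqP e1 /eqP e2].
have h1 : g (r (r d)) = g d by apply: (inv_orbit Hg); rewrite e1 porbit_id.
have h2 : g (r (r (r d))) = g (r d) by apply: (inv_orbit Hg); rewrite e2 porbit_id.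
have p1 := ps_cross d d; have p2 := ps_cross d (r d).
rewrite porbit_id in p1; rewrite rot_in_eq porbit_id in p2.
rewrite (gstep (r d) Hd) (gstep d Hd) in h1.
rewrite (gstep (r (r d)) Hd) (gstep (r d) Hd) in h2.
move: h1 h2 p1 p2; set K := K1 _ _.
by case: (g d); case: (g (r d)); case: (K d); case: (K (r d)); case: (K (r (r d))); case: (K (r (r (r d)))).
Qed.

Definition regionset (g : {ffun dart -> bool}) := [set R in porbits phi | [exists y in R, g y]].
Definition tcv (S : {set {set dart}}) : {ffun dart -> bool} :=
  [ffun d => odd #|[set R in S | touches R (crossing_of rot d)]|].
Definition bad (g : {ffun dart -> bool}) d :=
  ((F d == F (r (r d))) && g d) (+) ((F (r d) == F (r (r (r d)))) && g (r d)).
Definition nug d := (F d == F (r (r d))) || (F (r d) == F (r (r (r d)))).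

Lemma touches_face x d :
  touches (F x) (porbit rot d) = (F x \in [:: F d; F (r d); F (r (r d)); F (r (r (r d)))]).
Proof.
apply/existsP/idP.
  move=> [y /andP[Hy]]; rewrite in_rot => Hy'.
  have e : F y = F x by apply/eqP; rewrite eq_porbit_mem.
  by rewrite -e !inE; move: Hy'; rewrite !inE => /or4P[]/eqP ->; rewrite eqxx ?orbT.
rewrite !inE => /or4P[]/eqP e.
- by exists d; rewrite e porbit_id in_rot !inE eqxx.
- by exists (r d); rewrite e porbit_id in_rot !inE eqxx ?orbT.
- by exists (r (r d)); rewrite e porbit_id in_rot !inE eqxx ?orbT.
- by exists (r (r (r d))); rewrite e porbit_id in_rot !inE eqxx ?orbT.
Qed.

Lemma regionset_face g y : g \in invset phi -> (F y \in regionset g) = g y.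
Proof.
move=> Hg; rewrite inE imset_f //=; apply/existsP/idP.
  by move=> [z /andP[Hz gz]]; rewrite -(inv_orbit Hg Hz).
by move=> gy; exists y; rewrite porbit_id.
Qed.

Lemma tcv_region g d0 : g \in invset phi -> d2 g = K1 (pc d0) (qc d0) ->
  tcv (regionset g) = fx (ind d0) [ffun d => bad g d].
Proof.
move=> Hg Hd; apply/ffunP=> d; rewrite !ffunE.
have -> : [set R in regionset g | touches R (crossing_of rot d)] =
    [set R | (R \in [:: F d; F (r d); F (r (r d)); F (r (r (r d)))]) && (R \in regionset g)].
  apply/setP=> R; rewrite !inE andbC; case HR: (R \in porbits phi); rewrite ?andbF //=.
  move: HR => /imsetP[x _ ->]; rewrite /crossing_of touches_face.
  by rewrite !inE.
rewrite count4; first last.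
- exact: G2.
- by have := face_rot_neq (r (r (r d))); rewrite rK4 eq_sym.
- exact: face_rot_neq.
- exact: face_rot_neq.
- exact: face_rot_neq.
rewrite !regionset_face // /bad.
have p1 := ps_cross d0 d.
rewrite (gstep (r (r d)) Hd) (gstep (r d) Hd) (gstep d Hd).
rewrite -p1.
move: p1; set g0 := g d; set k0 := K1 _ _ d; set k1 := K1 _ _ (r d).
set k2 := K1 _ _ (r (r d)).
set e1 := F d == _; set e2 := F (r d) == _.
by case: g0; case: k0; case: k1; case: k2; case: e1; case: e2.
Qed.

Definition Goodv (v : {ffun dart -> bool}) := exists2 S : {set {set dart}}, S \subset porbits phi & tcv S = v.

Lemma odd_sub2 a c e : c <= a -> c <= e -> odd (a - c + (e - c)) = odd a (+) odd e.
Proof.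
move=> ha he; rewrite oddD !oddB //.
by case: (odd a); case: (odd c); case: (odd e).
Qed.

Lemma tcv_symdiff S T : tcv ((S :\: T) :|: (T :\: S)) = fx (tcv S) (tcv T).
Proof.
apply/ffunP=> d; rewrite !ffunE.
set P := fun R => touches R (crossing_of rot d).
set A := [set R in S | P R]; set B := [set R in T | P R].
have -> : [set R in (S :\: T) :|: (T :\: S) | P R] = (A :\: B) :|: (B :\: A).
  apply/setP=> R; rewrite !inE; case: (R \in S); case: (R \in T); case: (P R) => //.
rewrite cardsU.
have -> : (A :\: B) :&: (B :\: A) = set0.
  by apply/setP=> R; rewrite !inE; case: (R \in S); case: (R \in T); case: (P R).
rewrite cards0 subn0 !cardsD [B :&: A]setIC.
by apply: odd_sub2; rewrite subset_leq_card // ?subsetIl ?subsetIr.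
Qed.

Lemma Goodv_fx v w : Goodv v -> Goodv w -> Goodv (fx v w).
Proof.
move=> [S HS <-] [T HT <-]; exists ((S :\: T) :|: (T :\: S)); last exact: tcv_symdiff.
apply/subsetP=> R; rewrite !inE => /orP[]/andP[_ H]; [exact: (subsetP HS) | exact: (subsetP HT)].
Qed.

Lemma Goodv0 : Goodv f0.
Proof.
exists set0; rewrite ?sub0set //; apply/ffunP=> d; rewrite !ffunE.
have -> : [set R in set0 | touches R (crossing_of rot d)] = set0 by apply/setP=> R; rewrite !inE.
by rewrite cards0.
Qed.

Lemma Goodv_inv h : h \in invset rot -> (forall x, h x -> Goodv (ind x)) -> Goodv h.
Proof.
move: {2}#|[set y | h y]| (leqnn #|[set y | h y]|) => n.
elim: n h => [|n IH] h Hn Hh Hg.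
  have -> : h = f0; last exact: Goodv0.
  apply/ffunP=> y; rewrite !ffunE; apply/negP=> hy.
  by move: Hn; rewrite leqn0 => /eqP/cards0_eq/setP/(_ y); rewrite !inE hy.
case: (pickP (fun y => h y)) => [x hx|hn]; last first.
  have -> : h = f0 by apply/ffunP=> y; rewrite !ffunE; move: (hn y) => ->.
  exact: Goodv0.
pose h' := fx h (ind x).
have Hh' : h' \in invset rot.
  apply: invset_fx => //; rewrite inE; apply/forallP=> z; rewrite !ffunE.
  by rewrite (porbit_sym rot (r z)) (porbit_sym rot z) rot_orbit.
have lt : #|[set y | h' y]| < #|[set y | h y]|.
  apply: proper_card; apply/properP; split.
    apply/subsetP=> y; rewrite !inE !ffunE.
    case Hy: (y \in porbit rot x); last by rewrite addbF.
    by rewrite (inv_orbit Hh Hy) hx.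
  by exists x; rewrite !inE ?ffunE ?hx ?porbit_id.
have G' : Goodv h'.
  apply: IH => //; first by rewrite -ltnS; apply: leq_trans lt Hn.
  move=> y; rewrite /h' !ffunE; case Hy: (y \in porbit rot x).
    by rewrite (inv_orbit Hh Hy) hx.
  by rewrite addbF; exact: Hg.
have -> : h = fx h' (ind x) by rewrite /h' fxK.
by apply: Goodv_fx G' (Hg x hx).
Qed.

Lemma bad_rot g d : g \in invset phi -> bad g (r d) = bad g d.
Proof.
move=> Hg; rewrite /bad rK4.
have -> : (F (r (r d)) == F d) && g (r (r d)) = (F d == F (r (r d))) && g d.
  rewrite eq_sym; case E: (F d == F (r (r d))) => //=.
  by apply: (inv_orbit Hg); rewrite (eqP E) porbit_id.
by rewrite addbC.
Qed.

Lemma nug_rot d : nug (r d) = nug d.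
Proof. by rewrite /nug rK4 (eq_sym (F (r (r d)))) orbC. Qed.

Definition badv g : {ffun dart -> bool} := [ffun d => bad g d].
Definition nugv : {ffun dart -> bool} := [ffun d => nug d].

Lemma badv_inv g : g \in invset phi -> badv g \in invset rot.
Proof. by move=> Hg; rewrite inE; apply/forallP=> d; rewrite !ffunE bad_rot. Qed.

Lemma nugv_inv : nugv \in invset rot.
Proof. by rewrite inE; apply/forallP=> d; rewrite !ffunE nug_rot. Qed.

Lemma bad_cross g d y : g \in invset phi -> y \in porbit rot d -> bad g y = bad g d.
Proof. by move=> Hg Hy; have := inv_orbit (badv_inv Hg) Hy; rewrite !ffunE. Qed.

Lemma nug_cross d y : y \in porbit rot d -> nug y = nug d.
Proof. by move=> Hy; have := inv_orbit nugv_inv Hy; rewrite !ffunE. Qed.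

Lemma bad_nug g d : bad g d -> nug d.
Proof. by rewrite /bad /nug; case: (F d == _); case: (F (r d) == _). Qed.

Lemma K_out p q x : p < q < L -> x \in O -> idx x != p -> idx x != q ->
  (K1 p q x = (p < idx x) && (idx x < q)) /\ (K1 p q (r (r x)) = (p < idx x) && (idx x < q)).
Proof.
move=> /andP[pq qL] Hx /eqP np /eqP nq; rewrite !ffunE eidx_O // eidx_r2 //.
have iL := idx_lt Hx; move: (idx x) iL np nq => i iL np nq.
have e1 : (i <= q) = (i < q) by rewrite leq_eqVlt; case: eqP.
split; first by rewrite e1.
case: (ltnP i.+1 L) => h.
  rewrite modn_small // ltnS leq_eqVlt; case: eqP => //= e; lia.
have -> : i.+1 = L by lia.
rewrite modnn ltn0 /=; apply/esym/negbTE; apply/negP => /andP[_ ?]; lia.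
Qed.

Lemma mixed_not_nug g K x : g \in invset phi -> d2 g = K ->
  K x = K (r (r x)) -> K (r x) = K (r (r (r x))) -> K x != K (r x) -> ~~ nug x.
Proof.
move=> Hg Hd e1 e2 ne.
have n1 : F x != F (r (r x)).
  apply/negP=> /eqP e; have : g (r (r x)) = g x by apply: (inv_orbit Hg); rewrite e porbit_id.
  rewrite (gstep (r x) Hd) (gstep x Hd).
  by move: ne; case: (K x); case: (K (r x)); case: (g x).
have n2 : F (r x) != F (r (r (r x))).
  apply/negP=> /eqP e; have : g (r (r (r x))) = g (r x) by apply: (inv_orbit Hg); rewrite e porbit_id.
  rewrite (gstep (r (r x)) Hd) (gstep (r x) Hd) -e1.
  by move: ne; case: (K x); case: (K (r x)); case: (g (r x)).
by rewrite /nug negb_or n1 n2.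
Qed.

Lemma g_s g y : g \in invset phi -> g (s y) = g (r (r (r y))).
Proof. by move=> Hg; rewrite sE (face_inv_opp _ Hg). Qed.

Lemma interleave (i j p q : nat) : p < q -> i != j -> i != p -> i != q -> j != p -> j != q ->
  ((p < i) && (i < q)) != ((p < j) && (j < q)) ->
  ((minn i j < p) && (p < maxn i j)) != ((minn i j < q) && (q < maxn i j)).
Proof. move=> *; lia. Qed.

Lemma a1_O y : y \in O -> a1 y = y.
Proof. by rewrite /a1 => ->. Qed.

Definition xp d0 := iter (pc d0) s b.
Definition xq d0 := iter (qc d0) s b.

Lemma pc_lt d0 : pc d0 < L.
Proof. by have /andP[h1 h2] := pq_lt d0; apply: ltn_trans h1 h2. Qed.
Lemma qc_lt d0 : qc d0 < L.
Proof. by have /andP[h1 h2] := pq_lt d0. Qed.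

Lemma xp_in d0 : xp d0 \in O.  Proof. exact: iter_in. Qed.
Lemma xq_in d0 : xq d0 \in O.  Proof. exact: iter_in. Qed.
Lemma idx_xp d0 : idx (xp d0) = pc d0. Proof. exact: idx_iter (pc_lt d0). Qed.
Lemma idx_xq d0 : idx (xq d0) = qc d0. Proof. exact: idx_iter (qc_lt d0). Qed.

Lemma xp_c d0 : xp d0 \in porbit rot d0.
Proof. by rewrite in_c a1_O ?xp_in // idx_xp eqxx. Qed.
Lemma xq_c d0 : xq d0 \in porbit rot d0.
Proof. by rewrite in_c a1_O ?xq_in // idx_xq eqxx orbT. Qed.

Lemma same_cross x y : y \in porbit rot x -> porbit rot y = porbit rot x.
Proof. by move=> H; apply/eqP; rewrite eq_porbit_mem. Qed.

Lemma xq_rot d0 : xq d0 = r (xp d0) \/ xq d0 = r (r (r (xp d0))).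
Proof.
have : xq d0 \in porbit rot (xp d0) by rewrite (same_cross (xp_c d0)) xq_c.
rewrite in_rot !inE => /or4P[]/eqP e; [| by left | | by right].
- have := pq_lt d0; rewrite -idx_xp -idx_xq e; lia.
- by move: (r2_notin (xp_in d0)); rewrite -e xq_in.
Qed.

Lemma K_c d0 (K := K1 (pc d0) (qc d0)) :
  [/\ K (xp d0) = false, K (r (r (xp d0))) = true, K (xq d0) = true & K (r (r (xq d0))) = false].
Proof.
have /andP[h1 h2] := pq_lt d0.
rewrite /K !ffunE (eidx_O (xp_in d0)) (eidx_O (xq_in d0)) (eidx_r2 (xp_in d0)) (eidx_r2 (xq_in d0)) idx_xp idx_xq.
split.
- by rewrite ltnn.
- by rewrite modn_small ?ltnSn //= ; lia.
- by rewrite h1 leqnn.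
- case: (ltnP (qc d0).+1 L) => h.
    by rewrite modn_small // ltnn andbF.
  have -> : (qc d0).+1 = L by lia.
  by rewrite modnn ltn0.
Qed.

Lemma notin_idx d0 y : y \notin porbit rot d0 ->
  (idx (a1 y) != pc d0) && (idx (a1 y) != qc d0).
Proof. by rewrite in_c negb_or. Qed.

Lemma notmixed d0 y : nug d0 -> y \in O -> y \notin porbit rot d0 ->
  ((pc d0 < idx y) && (idx y < qc d0)) = ((pc d0 < idx (a2 y)) && (idx (a2 y) < qc d0)).
Proof.
move=> Hn Hy Hyc; apply/eqP; apply/negPn/negP => ne.
have /andP[ip iq] := notin_idx Hyc; rewrite a1_O // in ip iq.
have Hryc : r y \notin porbit rot d0 by rewrite rot_in_eq.
have /andP[jp jq] := notin_idx Hryc; rewrite -a2_a1 in jp jq.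
have ij : idx y != idx (a2 y).
  by apply/negP=> /eqP /(idx_inj Hy (a2_in y)) e; move: (a1_neq_a2 y); rewrite a1_O // -e eqxx.
have /andP[pq _] := pq_lt d0.
have il := interleave pq ij ip iq jp jq ne.
have Ep' : pc y = minn (idx y) (idx (a2 y)) by rewrite /pc a1_O.
have Eq' : qc y = maxn (idx y) (idx (a2 y)) by rewrite /qc a1_O.
rewrite -Ep' -Eq' -(idx_xp d0) -(idx_xq d0) in il.
have [g Hg Hd] := color y.
set K := K1 (pc y) (qc y) in Hd.
have xpy : xp d0 \notin porbit rot y.
  by rewrite porbit_sym (same_cross (xp_c d0)).
have xqy : xq d0 \notin porbit rot y.
  by rewrite porbit_sym (same_cross (xq_c d0)).
have /andP[a b'] := notin_idx xpy; rewrite a1_O ?xp_in // in a b'.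
have /andP[a' b''] := notin_idx xqy; rewrite a1_O ?xq_in // in a' b''.
have [k1 k2] := K_out (pq_lt y) (xp_in d0) a b'.
have [k3 k4] := K_out (pq_lt y) (xq_in d0) a' b''.
have Hm := mixed_not_nug Hg Hd (x := xp d0).
have Hnp : nug (xp d0) by rewrite (nug_cross (xp_c d0)).
case: (xq_rot d0) => e.
- have e2 : r (r (r (xp d0))) = r (r (xq d0)) by rewrite e.
  move: Hm; rewrite k1 k2 e2 -e k3 k4 Hnp.
  by move=> /(_ erefl erefl il).
- have e2 : r (xp d0) = r (r (xq d0)) by rewrite e rK4.
  move: Hm; rewrite k1 k2 -e e2 k3 k4 Hnp.
  by move=> /(_ erefl erefl il).
Qed.

Lemma iter_xq d0 k : iter k s (xq d0) = iter (qc d0 + k) s b.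
Proof. by rewrite /xq -iterD addnC. Qed.

Lemma mod_range n : L <= n < L + L -> n %% L = n - L.
Proof.
move=> /andP[h1 h2]; have -> : n = (n - L) + L by lia.
by rewrite modnDr modn_small; lia.
Qed.

Lemma chain_idx p q k : p < q < L -> 0 < k -> k < L - (q - p) ->
  let i := (q + k) %% L in [&& i != p, i != q & ~~ ((p < i) && (i < q))].
Proof.
move=> /andP[pq qL] k0 kL /=; case: (ltnP (q + k) L) => h.
  rewrite modn_small //; lia.
rewrite mod_range; last by apply/andP; split; lia.
lia.
Qed.

Lemma g_const_cross g K y : d2 g = K -> K y = false -> K (r y) = false -> K (r (r y)) = false ->
  g (r (r (r y))) = g y.
Proof. by move=> Hd e0 e1 e2; rewrite (gstep _ Hd) (gstep _ Hd) (gstep _ Hd) e0 e1 e2 !addbF. Qed.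

Lemma K_zero_cross d0 y : nug d0 -> y \in O ->
  let i := idx y in [&& i != pc d0, i != qc d0 & ~~ ((pc d0 < i) && (i < qc d0))] ->
  let K := K1 (pc d0) (qc d0) in
  [/\ K y = false, K (r y) = false & K (r (r y)) = false].
Proof.
move=> Hn Hy /= /and3P[ip iq io].
have Hyc : y \notin porbit rot d0 by rewrite in_c a1_O // negb_or ip iq.
have Hryc : r y \notin porbit rot d0 by rewrite rot_in_eq.
have /andP[jp jq] := notin_idx Hryc; rewrite -a2_a1 in jp jq.
have nm := notmixed Hn Hy Hyc.
have [k1 k2] := K_out (pq_lt d0) Hy ip iq.
have [k3 k4] := K_out (pq_lt d0) (a2_in y) jp jq.
rewrite -nm (negbTE io) in k3 k4; rewrite (negbTE io) in k1 k2.
split => //.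
move: k3 k4; rewrite /a2; case: ifP => _ //.
by rewrite rK4.
Qed.

Lemma chain d0 g : nug d0 -> g \in invset phi -> d2 g = K1 (pc d0) (qc d0) -> bad g d0 = false ->
  forall k, 0 < k -> k <= L - (qc d0 - pc d0) -> g (iter k s (xq d0)) = false.
Proof.
move=> Hn Hg Hd Hb; elim=> [//|k IH] _ hk.
case: k IH hk => [_ _|k IH hk].
  rewrite /= g_s //.
  have [c1 c2 c3 c4] := K_c d0.
  have Hbp : bad g (xp d0) = false by rewrite (bad_cross Hg (xp_c d0)).
  have Hnp : nug (xp d0) by rewrite (nug_cross (xp_c d0)).
  set x := xp d0 in c1 c2 Hbp Hnp *.
  case: (xq_rot d0) => e; rewrite e in c3 c4 *.
  - have g1 : g (r x) = g x by rewrite (gstep _ Hd) c1 addbF.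
    have g2 : g (r (r x)) = ~~ g x by rewrite (gstep _ Hd) g1 c3 addbT.
    have g3 : g (r (r (r x))) = g x by rewrite (gstep _ Hd) g2 c2 addbT negbK.
    have nf : F x != F (r (r x)).
      apply/negP=> /eqP ef; have : g (r (r x)) = g x by apply: (inv_orbit Hg); rewrite ef porbit_id.
      by rewrite g2; case: (g x).
    move: Hnp Hbp; rewrite /nug /bad (negbTE nf) /= => -> /=; rewrite g1 => H.
    by rewrite rK4.
  - have g1 : g (r x) = g x by rewrite (gstep _ Hd) c1 addbF.
    have c4' : K1 (pc d0) (qc d0) (r x) = false by move: c4; rewrite rK4.
    have g2 : g (r (r x)) = g x by rewrite (gstep _ Hd) g1 c4' addbF.
    have g3 : g (r (r (r x))) = ~~ g x by rewrite (gstep _ Hd) g2 c2 addbT.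
    have nf : F (r x) != F (r (r (r x))).
      apply/negP=> /eqP ef; have : g (r (r (r x))) = g (r x) by apply: (inv_orbit Hg); rewrite ef porbit_id.
      by rewrite g3 g1; case: (g x).
    move: Hnp Hbp; rewrite /nug /bad (negbTE nf) orbF => -> /= H.
    by rewrite addbF in H; rewrite rK4 g2.
have hk' : k.+1 <= L - (qc d0 - pc d0) by apply: ltnW.
have IHk := IH isT hk'.
rewrite iterS g_s //.
set y := iter k.+1 s (xq d0) in IHk *.
have Hy : y \in O by rewrite /y iter_xq iter_in.
have iy : idx y = (qc d0 + k.+1) %% L by rewrite /y iter_xq iter_mod idx_iter // ltn_pmod // L_gt0.
have ci := chain_idx (pq_lt d0) (isT : 0 < k.+1) hk.
rewrite /= -iy in ci.
have [k0 k1 k2] := K_zero_cross Hn Hy ci.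
by rewrite (g_const_cross Hd k0 k1 k2).
Qed.

Lemma outside_false d0 g y : nug d0 -> g \in invset phi -> d2 g = K1 (pc d0) (qc d0) -> bad g d0 = false ->
  y \in O -> [&& idx y != pc d0, idx y != qc d0 & ~~ ((pc d0 < idx y) && (idx y < qc d0))] -> g y = false.
Proof.
move=> Hn Hg Hd Hb Hy /and3P[ip iq io].
have /andP[pq qL] := pq_lt d0.
have iL := idx_lt Hy.
pose k := if qc d0 < idx y then idx y - qc d0 else L - qc d0 + idx y.
have ek : (qc d0 + k) %% L = idx y.
  rewrite /k; case: (ltnP (qc d0) (idx y)) => h.
    by rewrite modn_small; lia.
  by rewrite mod_range; lia.
have <- : iter k s (xq d0) = y by rewrite iter_xq iter_mod ek iter_idx.
apply: (chain Hn Hg Hd Hb); rewrite /k; case: (ltnP (qc d0) (idx y)) => h; lia.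
Qed.

Lemma a2_a1x x : a2 (a1 x) = a2 x.
Proof.
rewrite /a1; case: ifP => // Hx; rewrite /a2 rK4.
case: ifP => H1; case: ifP => H2 //.
- by move: (r2_notin H2); rewrite H1.
- by move/negbT: H2 => /notin_r2; rewrite H1.
Qed.

Lemma a1_cross_mem x : a1 x \in porbit rot x.
Proof. by rewrite -cross_a1 porbit_id. Qed.

Lemma nest d0 g x : nug d0 -> g \in invset phi -> d2 g = K1 (pc d0) (qc d0) -> bad g d0 = false ->
  bad g x -> qc x - pc x < qc d0 - pc d0.
Proof.
move=> Hn Hg Hd Hb Hx.
have Hxc : x \notin porbit rot d0.
  by apply/negP => H; move: Hx; rewrite (bad_cross Hg H) Hb.
have /andP[ip iq] := notin_idx Hxc.
have Hrxc : r x \notin porbit rot d0 by rewrite rot_in_eq.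
have /andP[jp jq] := notin_idx Hrxc; rewrite -a2_a1 in jp jq.
set y := a1 x in ip iq.
have Hy : y \in O := a1_in x.
have Hyc : y \notin porbit rot d0.
  by rewrite porbit_sym (same_cross (a1_cross_mem x)) -porbit_sym.
have nm := notmixed Hn Hy Hyc; rewrite /y a2_a1x -/y in nm.
case E: ((pc d0 < idx y) && (idx y < qc d0)).
  move: nm; rewrite E => /esym/andP[h1 h2]; move/andP: E => [h3 h4].
  have -> : pc x = minn (idx y) (idx (a2 x)) by []. have -> : qc x = maxn (idx y) (idx (a2 x)) by []. lia.
have gy : g y = false.
  by apply: (outside_false Hn Hg Hd Hb Hy); rewrite ip iq E.
have ci : [&& idx y != pc d0, idx y != qc d0 & ~~ ((pc d0 < idx y) && (idx y < qc d0))] by rewrite ip iq E.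
have [k0 k1 k2] := K_zero_cross Hn Hy ci.
have g1 : g (r y) = false by rewrite (gstep _ Hd) k0 gy.
have : bad g y = false by rewrite /bad gy g1 !andbF.
by rewrite (bad_cross Hg (a1_cross_mem x)) Hx.
Qed.

Lemma good_nug n : forall d0, qc d0 - pc d0 <= n -> nug d0 -> Goodv (ind d0).
Proof.
elim: n => [|n IH] d0 hn Hn.
  by have := pq_lt d0; lia.
have [g0 Hg0 Hd0] := color d0.
have fonei : fone \in invset phi by rewrite inE; apply/forallP=> z; rewrite !ffunE.
pose g := if bad g0 d0 then fx g0 fone else g0.
have Hg : g \in invset phi by rewrite /g; case: ifP => _ //; apply: invset_fx.
have Hd : d2 g = K1 (pc d0) (qc d0).
  rewrite /g; case: ifP => _ //; rewrite -Hd0; apply/ffunP=> z; rewrite !ffunE.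
  by case: (g0 z); case: (g0 (r z)).
have Hb : bad g d0 = false.
  rewrite /g; case: ifP => // B; move: B (G2 d0) Hn; rewrite /bad /nug !ffunE.
  by case: (F d0 == _); case: (F (r d0) == _); case: (g0 d0); case: (g0 (r d0)).
have Gb : Goodv (badv g).
  apply: Goodv_inv; first exact: badv_inv.
  move=> x; rewrite ffunE => Bx; apply: IH; last exact: bad_nug Bx.
  by have := nest Hn Hg Hd Hb Bx; lia.
have Gt : Goodv (tcv (regionset g)).
  by exists (regionset g) => //; apply/subsetP=> R; rewrite inE => /andP[].
have := Goodv_fx Gt Gb; rewrite (tcv_region Hg Hd).
have -> : fx (fx (ind d0) [ffun d => bad g d]) (badv g) = ind d0 by rewrite fxK.
by [].
Qed.

Lemma good_all d0 : Goodv (ind d0).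
Proof.
have [g Hg Hd] := color d0.
have Gb : Goodv (badv g).
  apply: Goodv_inv; first exact: badv_inv.
  move=> x; rewrite ffunE => Bx; apply: (@good_nug (qc x - pc x)) => //.
  exact: bad_nug Bx.
have Gt : Goodv (tcv (regionset g)).
  by exists (regionset g) => //; apply/subsetP=> R; rewrite inE => /andP[].
have := Goodv_fx Gt Gb; rewrite (tcv_region Hg Hd).
have -> : fx (fx (ind d0) [ffun d => bad g d]) (badv g) = ind d0 by rewrite fxK.
by [].
Qed.

End Main.


Definition sdiff (T : finType) (A B : {set T}) := (A :\: B) :|: (B :\: A).

Lemma odd_sdiff (T : finType) (A B : {set T}) : odd #|sdiff A B| = odd #|A| (+) odd #|B|.
Proof.
rewrite /sdiff cardsU.
have -> : (A :\: B) :&: (B :\: A) = set0.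
  by apply/setP=> R; rewrite !inE; case: (R \in A); case: (R \in B).
rewrite cards0 subn0 !cardsD [B :&: A]setIC.
by apply: odd_sub2; rewrite subset_leq_card // ?subsetIl ?subsetIr.
Qed.

Lemma sdiff_sub (T : finType) (A B C : {set T}) : A \subset C -> B \subset C -> sdiff A B \subset C.
Proof.
move=> HA HB; apply/subsetP=> R; rewrite !inE => /orP[]/andP[_ H]; [exact: (subsetP HA) | exact: (subsetP HB)].
Qed.

Lemma count_odd_set (T : finType) (s : seq T) (P : pred T) :
  odd (count P s) = odd #|[set R | odd (count_mem R s) && P R]|.
Proof.
elim: s => [|R0 s IH] /=.
  by rewrite (_ : [set R | false && P R] = set0) ?cards0 //; apply/setP=> R; rewrite !inE.
have -> : [set R | odd ((R0 == R) + count_mem R s) && P R] =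
    sdiff [set R | odd (count_mem R s) && P R] (if P R0 then [set R0] else set0).
  apply/setP=> R; rewrite /sdiff !inE oddD.
  case: (R0 =P R) => [<-|ne]; case: (P R0); rewrite ?inE ?eqxx //=.
  - by case: (odd _).
  - by case: (odd _).
  - by case: (R =P R0) => [e|_]; [move: ne; rewrite e|]; rewrite ?andbT ?andbF ?orbF.
  - by rewrite !andbF ?orbF; case: (odd _ && _).
rewrite odd_sdiff oddD -IH.
by case: (P R0); rewrite ?cards1 ?cards0 /=; case: (odd _).
Qed.

Section Final.
Variables (dart : finType) (rot opp : {perm dart}).
Hypothesis oppK : forall d, opp (opp d) = d.
Hypothesis oppN : forall d, opp d != d.
Hypothesis rot4 : forall d, #|porbit rot d| = 4.
Hypothesis conn : forall x y, connect (fun a b => (b == rot a) || (b == opp a)) x y.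
Hypothesis euler : (#|porbits rot| + #|porbits (opp * rot)| = #|porbits opp| + 2)%N.
Hypothesis knot : #|porbits (rot ^+ 2 * opp)%g| = 2.
Variable o : {ffun dart -> bool}.
Hypothesis heven : forall S : {set {set dart}}, ineffective rot opp o S -> ~~ odd #|S|.

Local Notation tcv := (tcv rot).
Implicit Types (S T : {set {set dart}}) (c : {set dart}).
Definition indc (c : {set dart}) : {ffun dart -> bool} := [ffun d => d \in c].

Lemma cc_about_E S : region_cc_about rot S o = [ffun d => o d (+) tcv S d].
Proof. by apply/ffunP=> d; rewrite !ffunE. Qed.

Lemma cc_eq S c : (region_cc_about rot S o == crossing_change c o) = (tcv S == indc c).
Proof.
apply/eqP/eqP => H; apply/ffunP=> d.
  by have := congr1 (fun f : {ffun dart -> bool} => f d) H; rewrite !ffunE => /addbI.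
by have := congr1 (fun f : {ffun dart -> bool} => f d) H; rewrite !ffunE => ->.
Qed.

Lemma ineff_of S : S \subset regions rot opp -> tcv S = f0 -> ineffective rot opp o S.
Proof.
move=> HS H; split => //; apply/ffunP=> d; rewrite cc_about_E ffunE.
by rewrite (congr1 (fun f : {ffun dart -> bool} => f d) H) ffunE addbF.
Qed.

Lemma surj c : c \in crossings rot -> exists2 S : {set {set dart}}, S \subset regions rot opp & tcv S = indc c.
Proof.
move=> /imsetP[d0 _ ->].
have [S HS HT] := good_all oppK oppN rot4 conn euler knot d0 d0.
by exists S => //; rewrite HT; apply/ffunP=> d; rewrite !ffunE.
Qed.

Lemma same_tcv_parity S T : S \subset regions rot opp -> T \subset regions rot opp -> tcv S = tcv T ->
  odd #|S| = odd #|T|.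
Proof.
move=> HS HT e.
have := heven (ineff_of (sdiff_sub HS HT) _).
rewrite /sdiff tcv_symdiff e fxx odd_sdiff => /(_ erefl).
by case: (odd #|S|); case: (odd #|T|).
Qed.

Lemma star_iff c S : S \subset regions rot opp -> tcv S = indc c ->
  star_crossing rot opp o c = odd #|S|.
Proof.
move=> HS HT; apply/existsP/idP.
  move=> [S' /and3P[HS' oS']]; rewrite cc_eq => /eqP e.
  by rewrite -(same_tcv_parity HS' HS) // e HT.
by move=> oS; exists S; rewrite HS oS cc_eq HT eqxx.
Qed.

Lemma freeze_fold (s : seq {set dart}) (o' : {ffun dart -> bool}) :
  foldl (fun o'' R => region_freeze_cc rot R o'') o' s =
  [ffun d => o' d (+) odd (size s) (+) odd (count (fun R => touches R (crossing_of rot d)) s)].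
Proof.
elim: s o' => [|R s IH] o' /=; first by apply/ffunP=> d; rewrite !ffunE !addbF.
rewrite IH; apply/ffunP=> d; rewrite !ffunE oddD.
by case: (o' d); case: (touches R _); case: (odd (size s)); case: (odd (count _ s)).
Qed.

Lemma freeze_iff c : freeze_realizable rot opp o c <->
  exists2 S : {set {set dart}}, S \subset regions rot opp & forall d, odd #|S| (+) tcv S d = (d \in c).
Proof.
split.
  move=> [s [Hall Hf]].
  exists [set R | odd (count_mem R s)].
    apply/subsetP=> R; rewrite inE => Ho; have : R \in s by rewrite -has_pred1 has_count; move: Ho; case: (count _ s).
    by move/(allP Hall).
  move=> d; have := congr1 (fun f : {ffun dart -> bool} => f d) Hf.
  rewrite freeze_fold !ffunE -addbA => /addbI <-.
  rewrite (count_odd_set s predT) (count_odd_set s (fun R => touches R (crossing_of rot d))).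
  congr addb; congr odd.
    by apply: eq_card => R; rewrite !inE andbT.
  by apply: eq_card => R; rewrite !inE.
move=> [S HS H]; exists (enum S); split.
  by apply/allP=> R; rewrite mem_enum => /(subsetP HS).
rewrite freeze_fold; apply/ffunP=> d; rewrite !ffunE -H !ffunE -cardE.
rewrite -addbA; congr addb; congr addb.
have -> : [set R in S | touches R (crossing_of rot d)] =
  [set R | (R \in enum S) && touches R (crossing_of rot d)].
  by apply/setP=> R; rewrite !inE mem_enum.
by rewrite card_filter_uniq ?enum_uniq.
Qed.

Lemma tcv0 : tcv set0 = f0.
Proof.
apply/ffunP=> d; rewrite !ffunE.
have -> : [set R in set0 | touches R (crossing_of rot d)] = set0 by apply/setP=> R; rewrite !inE.
by rewrite cards0.
Qed.

Lemma in_cross c d : c \in crossings rot -> (d \in c) = (crossing_of rot d == c).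
Proof. by move=> /imsetP[d0 _ ->]; rewrite /crossing_of eq_porbit_mem. Qed.

Lemma S_all_gen n : forall C : {set {set dart}}, #|C| <= n -> C \subset crossings rot ->
  exists2 S : {set {set dart}}, S \subset regions rot opp &
    tcv S = [ffun d => crossing_of rot d \in C] /\ odd #|S| = odd #|[set c in C | star_crossing rot opp o c]|.
Proof.
elim: n => [|n IH] C hC HC.
  have -> : C = set0 by apply/cards0_eq; move: hC; rewrite leqn0 => /eqP.
  exists set0; rewrite ?sub0set //; split.
    by rewrite tcv0; apply/ffunP=> d; rewrite !ffunE inE.
  by rewrite cards0 (_ : [set c in set0 | _] = set0) ?cards0 //; apply/setP=> x; rewrite !inE.
case: (set_0Vmem C) => [->|[c Hc]].
  exists set0; rewrite ?sub0set //; split.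
    by rewrite tcv0; apply/ffunP=> d; rewrite !ffunE inE.
  by rewrite cards0 (_ : [set c in set0 | _] = set0) ?cards0 //; apply/setP=> x; rewrite !inE.
have Hcc : c \in crossings rot := subsetP HC c Hc.
have hC' : #|C :\ c| <= n by move: hC; rewrite (cardsD1 c C) Hc.
have [S' HS' [T' P']] := IH (C :\ c) hC' (subset_trans (subsetDl _ _) HC).
have [Sc HSc Tc] := surj Hcc.
exists (sdiff S' Sc); first exact: sdiff_sub.
split.
  rewrite /sdiff tcv_symdiff T' Tc; apply/ffunP=> d; rewrite !ffunE (in_cross d Hcc) !inE.
  by case: (crossing_of rot d =P c) => [->|_]; rewrite ?Hc ?addbF /=.
rewrite odd_sdiff P' -(star_iff HSc Tc).
rewrite [in RHS](cardsD1 c) !inE Hc /=.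
have -> : [set c0 in C | star_crossing rot opp o c0] :\ c = [set c0 in C :\ c | star_crossing rot opp o c0].
  by apply/setP=> x; rewrite !inE andbA.
by rewrite oddD addbC; case: (star_crossing rot opp o c).
Qed.

Lemma main_iff :
  (forall c, c \in crossings rot -> freeze_realizable rot opp o c) <->
  ~~ odd #|[set c in crossings rot | star_crossing rot opp o c]|.
Proof.
have [Sa HSa [Ta Pa]] := S_all_gen (leqnn _) (subxx (crossings rot)).
have Ta' : tcv Sa = fone dart.
  by rewrite Ta; apply/ffunP=> d; rewrite !ffunE; apply: imset_f.
split.
  move=> Hf; apply/negP=> Ho.
  have : [set c in crossings rot | star_crossing rot opp o c] != set0.
    by apply/eqP=> e; move: Ho; rewrite e cards0.
  case/set0Pn=> c; rewrite inE => /andP[Hcc Hst].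
  have [Sc HSc Tc] := surj Hcc.
  rewrite (star_iff HSc Tc) in Hst.
  have [S HS HSd] := (freeze_iff c).1 (Hf c Hcc).
  case E: (odd #|S|).
    have : tcv S = tcv (sdiff Sa Sc).
      apply/ffunP=> d; have := HSd d; rewrite E /sdiff tcv_symdiff Ta' Tc !ffunE => <-.
      by case: (odd _).
    move/(same_tcv_parity HS (sdiff_sub HSa HSc)); rewrite odd_sdiff E Pa Ho Hst.
    by [].
  have : tcv S = tcv Sc.
    by apply/ffunP=> d; have := HSd d; rewrite E Tc !ffunE => <-.
  by move/(same_tcv_parity HS HSc); rewrite E Hst.
move=> He c Hcc; apply/(freeze_iff c).
have [Sc HSc Tc] := surj Hcc.
case E: (odd #|Sc|).
  exists (sdiff Sa Sc); first exact: sdiff_sub.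
  move=> d; rewrite odd_sdiff Pa (negbTE He) E /sdiff tcv_symdiff Ta' Tc !ffunE.
  by case: (d \in c).
by exists Sc => // d; rewrite E Tc ffunE.
Qed.

End Final.

Unset Implicit Arguments.
Set Strict Implicit.

Theorem theorem3p5 (dart : finType) (rot opp : {perm dart})
  (hP : is_knot_projection rot opp) (o : {ffun dart -> bool})
  (ho : valid_over rot o)
  (heven : forall S : {set {set dart}}, ineffective rot opp o S -> ~~ odd #|S|) :
  (forall c, c \in crossings rot -> freeze_realizable rot opp o c) <->
  ~~ odd #|[set c in crossings rot | star_crossing rot opp o c]|.
Proof.
case: hP => H1 H2 H3 H4 H5.
have oppK : forall d, opp (opp d) = d by move=> d; case: (H1 d).
have oppN : forall d, opp d != d by move=> d; case: (H1 d).
exact: (main_iff oppK oppN H2 H3 H4 H5 heven).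
Qed.
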